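(* Let $w$ be a weight on $\mathbb{T}$ with $w>0$ a.e. and $w,w^{-1}\in BMO(\mathbb{T})$, let $n\ge1$ and write $\Phi_n^*=\Phi_n^*(z,w)$. Then for every $j=1,2,\dots$, \[ w^jP_{[1,n]}\Phi_n^*=\sum_{l=1}^{j}\binom{j-1}{l-1}{\bf C}_l\, w^{j-l}\Phi_n^* \] and \[ w^{-j}P_{[1,n]}\Phi_n^*=-\sum_{l=0}^{j}\binom{j}{l}\widetilde{\bf C}_{l+1}\, w^{-(j-l)}(w\Phi_n^* ). \]
   Context: $P_{[i,j]}$ denotes the orthogonal projection in $L^2(\mathbb{T},d\theta)$ onto the span of $e^{ik\theta}$, $i\le k\le j$. A function is identified with the operator of multiplication by it, and $[A,B]=AB-BA$. Define ${\bf C}_0=P_{[1,n]}$, ${\bf C}_l=[w,{\bf C}_{l-1}]$ for $l\ge1$, and $\widetilde{\bf C}_0=P_{[1,n]}$, $\widetilde{\bf C}_l=[w^{-1},\widetilde{\bf C}_{l-1}]$ for $l\ge1$. $\Phi_n(z,w)$ is the monic degree-$n$ polynomial orthogonal in $L^2(w\,d\theta)$ to lower-degree polynomials, and for $Q_n(z)=q_nz^n+\dots+q_0$, $Q_n^*(z)=\bar q_0z^n+\dots+\bar q_n$. *)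

(* Defs.v *)
From HB Require Import structures.
From mathcomp Require Import all_boot all_order all_algebra.
From mathcomp Require Import all_classical all_reals all_analysis.
From mathcomp Require Import complex.
Set Implicit Arguments. Unset Strict Implicit. Unset Printing Implicit Defensive.
Import Order.TTheory GRing.Theory Num.Theory.
Local Open Scope ring_scope.
Local Open Scope classical_set_scope.
Local Open Scope complex_scope.

(* The circle T is modelled by [0, 2 pi]; functions on T are 2pi-periodic
   functions R -> R (real) or R -> R[i] (complex). *)
Definition circ_dom (R : realType) : set R := `[0%R, (2 * pi)%R].

Definition periodic2pi (R : realType) (T : Type) (f : R -> T) : Prop :=
  forall x : R, f (x + 2 * pi)%R = f x.

Definition cint (R : realType) (D : set R) (f : R -> R[i]) : R[i] :=
  Complex (Rintegral (@lebesgue_measure R) D (fun x => @complex.Re R (f x)))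
          (Rintegral (@lebesgue_measure R) D (fun x => @complex.Im R (f x))).

Definition eit (R : realType) (t : R) : R[i] := Complex (cos t) (sin t).

Definition fourier_coef (R : realType) (f : R -> R[i]) (k : int) : R[i] :=
  ((2 * pi)^-1)%:C * cint (@circ_dom R) (fun t => f t * eit (- (k%:~R * t))).

(* P_{[a,b]} : projection onto span{ e^{ik t} : a <= k <= b } *)
Definition ProjF (R : realType) (a b : int) (f : R -> R[i]) : R -> R[i] :=
  fun t => \sum_(k <- [seq (a + m%:Z)%R | m <- iota 0 `|(b - a + 1)%R|%N])
             fourier_coef f k * eit (k%:~R * t).

Definition mulop (R : realType) (g : R -> R) (f : R -> R[i]) : R -> R[i] :=
  fun t => (g t)%:C * f t.

Definition op (R : realType) := (R -> R[i]) -> (R -> R[i]).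

Definition commop (R : realType) (A B : op R) : op R :=
  fun f t => A (B f) t - B (A f) t.

Fixpoint Cop (R : realType) (w : R -> R) (n : nat) (l : nat) : op R :=
  match l with
  | 0 => ProjF 1 n
  | l'.+1 => commop (mulop w) (Cop w n l')
  end.

Definition Ctil (R : realType) (w : R -> R) (n : nat) (l : nat) : op R :=
  Cop (fun x => (w x)^-1) n l.

Definition polystar (R : realType) (n : nat) (Q : {poly R[i]}) : {poly R[i]} :=
  \poly_(k < n.+1) conjc (Q`_(n - k)).

Definition is_weight (R : realType) (w : R -> R) : Prop :=
  periodic2pi w /\
  (@lebesgue_measure R).-integrable (@circ_dom R) (fun x => (w x)%:E) /\
  {ae @lebesgue_measure R, forall x, circ_dom x -> (0 < w x)%R}.

Definition avgI (R : realType) (a b : R) (f : R -> R) : R :=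
  (b - a)^-1 * Rintegral (@lebesgue_measure R) `[a, b] f.

Definition is_BMO_T (R : realType) (f : R -> R) : Prop :=
  periodic2pi f /\
  (@lebesgue_measure R).-integrable (@circ_dom R) (fun x => (f x)%:E) /\
  exists M : R, forall a b : R, (a < b)%R -> (b <= a + 2 * pi)%R ->
    ((b - a)^-1 * Rintegral (@lebesgue_measure R) `[a, b]
        (fun x => `|f x - avgI a b f|) <= M)%R.

Definition is_OPUC (R : realType) (w : R -> R) (n : nat) (Phi : {poly R[i]}) : Prop :=
  Phi \is monic /\ size Phi = n.+1 /\
  forall k : nat, (k < n)%N ->
    cint (@circ_dom R) (fun t => Phi.[eit t] * conjc (eit (k%:R * t)) * (w t)%:C) = 0.

(* Main.v *)
Require Import Defs.
From HB Require Import structures.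
From mathcomp Require Import all_boot all_order all_algebra.
From mathcomp Require Import all_classical all_reals all_analysis.
From mathcomp Require Import complex ring zify.
From mathcomp Require Import measurable_realfun.
Import Order.TTheory GRing.Theory Num.Theory.
Local Open Scope ring_scope.
Local Open Scope classical_set_scope.
Local Open Scope complex_scope.

Lemma pascal_sum (R : realType) (k : nat) (A : nat -> R[i]) :
  \sum_(0 <= m < k.+2) ('C(k.+1, m))%:R * A m =
  \sum_(0 <= m < k.+1) ('C(k, m))%:R * (A m.+1 + A m).
Proof.
have E : \sum_(0 <= m < k.+1) ('C(k, m))%:R * A m =
    A 0%N + \sum_(0 <= m < k.+1) ('C(k, m.+1))%:R * A m.+1.
  rewrite big_nat_recl // [in RHS]big_nat_recr //= (bin_small (ltnSn k)).
  by rewrite bin0 mul1r mul0r addr0.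
rewrite big_nat_recl // bin0.
under eq_bigr do rewrite binS natrD mulrDl.
rewrite big_split /=.
under [X in _ = X]eq_bigr do rewrite mulrDr.
rewrite [X in _ = X]big_split /= E.
by rewrite mul1r addrA addrC.
Qed.

Lemma mulop_S (R : realType) (u : R -> R) (i : nat) (g : R -> R[i]) :
  mulop u (mulop (fun x => u x ^+ i) g) = mulop (fun x => u x ^+ i.+1) g.
Proof.
by apply/funext => t; rewrite /mulop exprS rmorphM mulrA.
Qed.

Lemma leib (R : realType) (u : R -> R) (X : nat -> op R)
  (hX : forall m g t, X m.+1 g t = (u t)%:C * X m g t - X m (mulop u g) t) :
  forall k g t, mulop (fun x => u x ^+ k) (X 0%N g) t =
    \sum_(0 <= m < k.+1) ('C(k, m))%:R * X m (mulop (fun x => u x ^+ (k - m)) g) t.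
Proof.
elim=> [|k IH] g t.
  rewrite big_nat1 bin0 mul1r /mulop expr0 mul1r.
  congr (X 0%N _ t); apply/funext => x; by rewrite expr0 mul1r.
rewrite pascal_sum.
have -> : mulop (fun x => u x ^+ k.+1) (X 0%N g) t =
   (u t)%:C * mulop (fun x => u x ^+ k) (X 0%N g) t.
  by rewrite /mulop exprS rmorphM mulrA.
rewrite IH mulr_sumr big_nat [in RHS]big_nat; apply: eq_bigr => m /andP[_ hm].
rewrite mulrCA; congr (_ * _).
by rewrite hX subSS mulop_S -subSn // subrK.
Qed.

Section S.
Variable R : realType.

Lemma eitD (a b : R) : eit (a + b) = eit a * eit b.
Proof.
rewrite /eit cosD sinD /=; congr Complex; ring.
Qed.

Lemma eit0 : eit (0 : R) = 1.
Proof. by rewrite /eit cos0 sin0. Qed.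

Lemma eitNK (a : R) : eit a * eit (- a) = 1.
Proof. by rewrite -eitD subrr eit0. Qed.

Lemma eitX (m : nat) (t : R) : eit (m%:R * t) = eit t ^+ m.
Proof.
elim: m => [|m IH]; first by rewrite mul0r eit0 expr0.
by rewrite -addn1 natrD mulrDl mul1r eitD IH exprD expr1.
Qed.

Lemma conj_eit (a : R) : conjc (eit a) = eit (- a).
Proof. by rewrite /eit cosN sinN. Qed.

Lemma eit_conjK (a : R) : eit a * conjc (eit a) = 1.
Proof. by rewrite conj_eit eitNK. Qed.

Lemma polystarE (n : nat) (Phi : {poly R[i]}) (x : R[i]) :
  size Phi = n.+1 -> x * conjc x = 1 ->
  (polystar n Phi).[x] = x ^+ n * conjc (Phi.[x]).
Proof.
move=> sz hx.
rewrite /polystar horner_poly horner_coef sz rmorph_sum mulr_sumr.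
rewrite (reindex_inj rev_ord_inj) /=; apply: eq_bigr => i _.
rewrite subSS subKn; last by rewrite -ltnS.
rewrite rmorphM rmorphXn mulrCA; congr (_ * _).
have hi : (i <= n)%N by rewrite -ltnS.
have -> : x ^+ n = x ^+ (n - i) * x ^+ i by rewrite -exprD subnK.
by rewrite -mulrA -exprMn hx expr1n mulr1.
Qed.

Lemma fineBN (a b : \bar R) : fine (b - a)%E = - fine (a - b)%E.
Proof. by case: a => [a||]; case: b => [b||] //=; rewrite ?opprB ?oppr0. Qed.

Lemma RintegralN (D : set R) (f : R -> R) :
  Rintegral (@lebesgue_measure R) D (fun x => - f x) =
  - Rintegral (@lebesgue_measure R) D f.
Proof.
rewrite /Rintegral.
set g := (fun x => (f x)%:E).
rewrite (_ : (fun x => (- f x)%:E) = (\- g)%E); last first.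
  by apply/funext => x; rewrite /g EFinN.
rewrite [X in fine X = _]integralE [X in _ = - fine X]integralE funeposN funenegN.
by rewrite fineBN.
Qed.

Lemma cint_conj (D : set R) (F : R -> R[i]) :
  cint D (fun t => conjc (F t)) = conjc (cint D F).
Proof.
rewrite /cint.
have -> : (fun x => complex.Re (conjc (F x))) = (fun x => complex.Re (F x)).
  by apply/funext => x; case: (F x).
have -> : (fun x => complex.Im (conjc (F x))) = (fun x => - complex.Im (F x)).
  by apply/funext => x; case: (F x).
by rewrite RintegralN.
Qed.

Lemma conjcM (a b : R[i]) : conjc (a * b) = conjc a * conjc b.
Proof. exact: rmorphM. Qed.

Lemma intr1m (m : nat) : ((1 + m%:Z)%:~R : R) = (m.+1)%:R.
Proof. by rewrite -PoszD -pmulrn add1n. Qed.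

Lemma pw (w : R -> R) (n : nat) (Phi : {poly R[i]}) (m : nat) (t : R) :
  size Phi = n.+1 -> (m < n)%N ->
  mulop w (fun t => (polystar n Phi).[eit t]) t * eit (- ((1 + m%:Z)%:~R * t)) =
  conjc (Phi.[eit t] * conjc (eit ((n - m.+1)%:R * t)) * (w t)%:C).
Proof.
move=> sz hm.
rewrite /mulop polystarE ?eit_conjK // intr1m !conjcM conjcK conjc_real.
have -> : eit t ^+ n = eit t ^+ (n - m.+1) * eit t ^+ m.+1.
  by rewrite -exprD subnK.
rewrite -!eitX.
have E := eitNK (m.+1%:R * t).
rewrite -[RHS]mulr1 -E; ring.
Qed.

Lemma proj_wPs (w : R -> R) (n : nat) (Phi : {poly R[i]}) :
  size Phi = n.+1 ->
  (forall k : nat, (k < n)%N ->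
    cint (@circ_dom R) (fun t => Phi.[eit t] * conjc (eit (k%:R * t)) * (w t)%:C) = 0) ->
  forall t, ProjF 1 n (mulop w (fun t => (polystar n Phi).[eit t])) t = 0.
Proof.
move=> sz hO t; rewrite /ProjF big1_seq // => k /andP[_ /mapP[m]].
rewrite mem_iota add0n subrK absz_nat => /andP[_ hm] ->.
rewrite /fourier_coef.
rewrite (_ : cint _ _ = conjc (cint (@circ_dom R)
   (fun t => Phi.[eit t] * conjc (eit ((n - m.+1)%:R * t)) * (w t)%:C))); last first.
  by rewrite -cint_conj; congr cint; apply/funext => t'; rewrite pw.
rewrite hO; last by lia.
by rewrite conjc0 mulr0 mul0r.
Qed.

Lemma ReD (x y : R[i]) : complex.Re (x + y) = complex.Re x + complex.Re y.
Proof. by case: x; case: y. Qed.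
Lemma ImD (x y : R[i]) : complex.Im (x + y) = complex.Im x + complex.Im y.
Proof. by case: x; case: y. Qed.

Lemma Re_sum (N : nat) (F : 'I_N -> R[i]) :
  complex.Re (\sum_(i < N) F i) = \sum_(i < N) complex.Re (F i).
Proof. exact: (big_morph _ ReD (erefl _)). Qed.
Lemma Im_sum (N : nat) (F : 'I_N -> R[i]) :
  complex.Im (\sum_(i < N) F i) = \sum_(i < N) complex.Im (F i).
Proof. exact: (big_morph _ ImD (erefl _)). Qed.

Lemma Re_eit (c : R[i]) (s : R) :
  complex.Re (c * eit s) = complex.Re c * cos s - complex.Im c * sin s.
Proof. by case: c. Qed.
Lemma Im_eit (c : R[i]) (s : R) :
  complex.Im (c * eit s) = complex.Re c * sin s + complex.Im c * cos s.
Proof. by case: c. Qed.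

Lemma poly_eit (P : {poly R[i]}) (a t : R) :
  P.[eit t] * eit (- (a * t)) =
  \sum_(i < size P) P`_i * eit ((i%:R - a) * t).
Proof.
rewrite horner_coef mulr_suml; apply: eq_bigr => i _.
by rewrite -eitX -mulrA -eitD mulrBl.
Qed.

Lemma cos_meas (b : R) : measurable_fun setT (fun t : R => cos (b * t)).
Proof.
exact: (measurableT_comp (measurable_realfun.continuous_measurable_fun (@continuous_cos R))
  (measurable_realfun.mulrl_measurable b)).
Qed.
Lemma sin_meas (b : R) : measurable_fun setT (fun t : R => sin (b * t)).
Proof.
exact: (measurableT_comp (measurable_realfun.continuous_measurable_fun (@continuous_sin R))
  (measurable_realfun.mulrl_measurable b)).
Qed.

Lemma Re_poly_meas (P : {poly R[i]}) (a : R) :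
  measurable_fun setT (fun t : R => complex.Re (P.[eit t] * eit (- (a * t)))).
Proof.
rewrite (_ : (fun t => _) = fun t => \sum_(i < size P)
   (complex.Re P`_i * cos ((i%:R - a) * t) - complex.Im P`_i * sin ((i%:R - a) * t))).
  apply: measurable_sum => i; apply: measurable_funB; apply: measurable_funM => //.
  - exact: cos_meas.
  - exact: sin_meas.
apply/funext => t; rewrite poly_eit Re_sum; apply: eq_bigr => i _.
by rewrite Re_eit.
Qed.

Lemma Im_poly_meas (P : {poly R[i]}) (a : R) :
  measurable_fun setT (fun t : R => complex.Im (P.[eit t] * eit (- (a * t)))).
Proof.
rewrite (_ : (fun t => _) = fun t => \sum_(i < size P)
   (complex.Re P`_i * sin ((i%:R - a) * t) + complex.Im P`_i * cos ((i%:R - a) * t))).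
  apply: measurable_sum => i; apply: measurable_funD; apply: measurable_funM => //.
  - exact: sin_meas.
  - exact: cos_meas.
apply/funext => t; rewrite poly_eit Im_sum; apply: eq_bigr => i _.
by rewrite Im_eit.
Qed.

Lemma inv_meas : measurable_fun setT (fun x : R => x^-1 * x).
Proof.
rewrite (_ : (fun x : R => x^-1 * x) = \1_(~` [set 0%R])).
  apply: measurable_indic; apply: measurableC; exact: measurable_set1.
apply/funext => x; rewrite indicE.
have [->|nz] := eqVneq x 0.
  rewrite invr0 mul0r (_ : (0:R) \in _ = false) //.
  by apply/negbTE/negP => /set_mem; apply.
rewrite mulVf // (_ : x \in _ = true) //.
by apply/mem_set => /= h; rewrite h eqxx in nz.
Qed.

Lemma ReMr (h : R) (z : R[i]) : complex.Re (h%:C * z) = h * complex.Re z.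
Proof. by case: z => a b /=; rewrite mul0r subr0. Qed.
Lemma ImMr (h : R) (z : R[i]) : complex.Im (h%:C * z) = h * complex.Im z.
Proof. by case: z => a b /=; rewrite mul0r addr0. Qed.

Lemma Rint_inv (w : R -> R) (f : R -> R) :
  measurable_fun (@circ_dom R) w ->
  {ae @lebesgue_measure R, forall x, circ_dom x -> (0 < w x)%R} ->
  measurable_fun setT f ->
  Rintegral (@lebesgue_measure R) (@circ_dom R) (fun t => ((w t)^-1 * w t) * f t) =
  Rintegral (@lebesgue_measure R) (@circ_dom R) f.
Proof.
move=> mw hae mf; rewrite /Rintegral; congr fine.
have mD : measurable (@circ_dom R) by exact: measurable_itv.
have mfD : measurable_fun (@circ_dom R) f by exact: measurable_funS mf.
apply: ae_eq_integral => //.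
- apply/measurable_EFinP; apply: measurable_funM => //.
  exact: (measurableT_comp inv_meas mw).
- exact/measurable_EFinP.
- have AF := ae_filter_ringOfSetsType (@lebesgue_measure R).
  apply: filterS hae => x hx Dx /=.
  by rewrite mulVf ?mul1r // gt_eqF // hx.
Qed.

Lemma fourier_inv (w : R -> R) (P : {poly R[i]}) (k : int) :
  measurable_fun (@circ_dom R) w ->
  {ae @lebesgue_measure R, forall x, circ_dom x -> (0 < w x)%R} ->
  fourier_coef (mulop (fun x => (w x)^-1) (mulop w (fun t => P.[eit t]))) k =
  fourier_coef (fun t => P.[eit t]) k.
Proof.
move=> mw hae; rewrite /fourier_coef /cint; congr (_ * Complex _ _).
- rewrite -(@Rint_inv w _ mw hae (Re_poly_meas P k%:~R)); congr Rintegral.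
  by apply/funext => t; rewrite /mulop mulrA -rmorphM -mulrA ReMr.
- rewrite -(@Rint_inv w _ mw hae (Im_poly_meas P k%:~R)); congr Rintegral.
  by apply/funext => t; rewrite /mulop mulrA -rmorphM -mulrA ImMr.
Qed.

End S.

Lemma ProjF_ext (R : realType) (a b : int) (f g : R -> R[i]) :
  (forall k, fourier_coef f k = fourier_coef g k) -> ProjF a b f = ProjF a b g.
Proof. by move=> H; apply/funext => t; rewrite /ProjF; apply: eq_bigr => k _; rewrite H. Qed.

Theorem lemma2p3 (R : realType) (w : R -> R) (n : nat) (Phi : {poly R[i]}) :
  is_weight w -> is_BMO_T w -> is_BMO_T (fun x => (w x)^-1) ->
  (1 <= n)%N -> is_OPUC w n Phi ->
  let Ps : R -> R[i] := fun t => (polystar n Phi).[eit t] in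
  forall j : nat, (1 <= j)%N ->
    {ae @lebesgue_measure R, forall t, circ_dom t ->
      mulop (fun x => w x ^+ j) (ProjF 1 n Ps) t =
      \sum_(1 <= l < j.+1)
         ('C(j.-1, l.-1))%:R * Cop w n l (mulop (fun x => w x ^+ (j - l)) Ps) t}
  /\
    {ae @lebesgue_measure R, forall t, circ_dom t ->
      mulop (fun x => w x ^- j) (ProjF 1 n Ps) t =
      - \sum_(0 <= l < j.+1)
         ('C(j, l))%:R * Ctil w n l.+1 (mulop (fun x => w x ^- (j - l)) (mulop w Ps)) t}.
Proof.
move=> [_ [Hint Hae]] _ _ hn [_ [sz hO]] Ps j hj.
have mw : measurable_fun (@circ_dom R) w.
  by move/measurable_int: Hint => /measurable_EFinP.
have P0 : forall t, ProjF 1 n (mulop w Ps) t = 0 := @proj_wPs R w n Phi sz hO.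
have PB : ProjF 1 n (mulop (fun x => (w x)^-1) (mulop w Ps)) = ProjF 1 n Ps.
  by apply: ProjF_ext => k; apply: fourier_inv.
split; apply: aeW => t _.
- case: j hj => [//|k] _.
  have L := @leib R w (fun m => Cop w n m.+1) (fun m g t => erefl) k Ps t.
  rewrite big_add1 /=.
  have -> : \sum_(0 <= i0 < k.+1) 'C(k, i0)%:R *
      Cop w n i0.+1 (mulop (fun x => w x ^+ (k.+1 - i0.+1)) Ps) t =
    \sum_(0 <= m < k.+1) 'C(k, m)%:R *
      Cop w n m.+1 (mulop (fun x => w x ^+ (k - m)) Ps) t.
    by apply: eq_bigr => i _; rewrite subSS.
  rewrite -L /mulop /= /commop /mulop P0 subr0 exprSr rmorphM.
  by rewrite mulrA.
- have L := @leib R (fun x => (w x)^-1) (fun m => Ctil w n m.+1)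
     (fun m g t => erefl) j (mulop w Ps) t.
  have E : forall i, (fun x => (w x)^-1 ^+ i) = (fun x => w x ^- i).
    by move=> i; apply/funext => x; rewrite exprVn.
  under eq_bigr => l _ do rewrite -E.
  rewrite -L /mulop /Ctil /= /commop /mulop P0 PB mulr0 sub0r mulrN opprK.
  by rewrite exprVn.
Qed.
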